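(* Let $\Lambda=KQ/\langle I\rangle$ be a $1$-Gorenstein gentle algebra over an algebraically closed field $K$, let $\Gamma=KQ^{Aus}/\langle I^{Aus}\rangle$ be its Cohen–Macaulay Auslander algebra and $\Phi$ the functor described in the context. Let $N=((N_i)_{i\in Q_0},(N_\alpha)_{\alpha\in Q_1})$ be a Gorenstein projective $\Lambda$-module, so that $\widehat{N}=\Phi(N)$ has underlying space $\bigoplus_{i\in Q_0}\widehat{N}_i\oplus\bigoplus_{\alpha\in Q_1^{cyc}}\widehat{N}_\alpha$. Then: (i) for every $i\in Q_0$, $\dim\widehat{N}_i=\dim N_i=\dim\mathrm{Hom}_\Lambda(P_i,N)$, where $P_i=\Lambda e_i$ is the indecomposable projective $\Lambda$-module at $i$; (ii) for every $\alpha\in Q_1^{cyc}$, $\dim\widehat{N}_\alpha=\dim\mathrm{Hom}_\Lambda(P_{s(\alpha)},N)-\dim\mathrm{Hom}_\Lambda(R(\beta),N)$, where $\beta$ is the arrow satisfying $\alpha\beta\in I$ and $R(\beta)=\Lambda\beta$.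
   Context: Conventions: arrows $\alpha:s(\alpha)\to t(\alpha)$; paths composed right to left ($\alpha\beta$ means $\beta$ then $\alpha$, so $t(\beta)=s(\alpha)$). A gentle algebra is a finite dimensional $\Lambda=KQ/\langle I\rangle$ where $I$ is a set of length-$2$ paths such that: each vertex is the start of at most two and the end of at most two arrows; for each arrow $\alpha$ there is at most one arrow $\beta$ with $t(\beta)=s(\alpha)$, $\alpha\beta\notin I$, at most one $\gamma$ with $s(\gamma)=t(\alpha)$, $\gamma\alpha\notin I$, at most one $\beta$ with $t(\beta)=s(\alpha)$, $\alpha\beta\in I$, and at most one $\gamma$ with $s(\gamma)=t(\alpha)$, $\gamma\alpha\in I$. $\Lambda$ is $1$-Gorenstein if its injective dimension as a left and as a right module is at most $1$. Modules are finite dimensional left modules (representations of $(Q,I)$). A $\Lambda$-module $G$ is Gorenstein projective if there is an exact complex $\cdots\to P^{-1}\to P^0\xrightarrow{d^0}P^1\to\cdots$ of projective $\Lambda$-modules which remains exact under $\mathrm{Hom}_\Lambda(-,\Lambda)$ and with $G\cong\mathrm{Ker}\,d^0$. $\mathcal{C}(\Lambda)$ is the set of repetition-free cyclic paths $\alpha_1\cdots\alpha_n$ (up to cyclic permutation) with $\alpha_i\alpha_{i+1}\in I$ for all $i$ (indices mod $n$); $Q_1^{cyc}$ is the set of arrows on such cycles, $Q_1^{ncyc}=Q_1\setminus Q_1^{cyc}$. For each arrow $\gamma$, $R(\gamma)$ denotes the left ideal $\Lambda\gamma$. $Q^{Aus}$ has vertices $Q_0\sqcup Q_1^{cyc}$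 and arrows $Q_1^{ncyc}\sqcup\{\alpha^+:s(\alpha)\to\alpha\}_{\alpha\in Q_1^{cyc}}\sqcup\{\alpha^-:\alpha\to t(\alpha)\}_{\alpha\in Q_1^{cyc}}$; $I^{Aus}=\{\beta^+\alpha^-\mid\beta\alpha\in I,\ \alpha,\beta\in Q_1^{cyc}\}\cup\{\beta\alpha\mid\beta\alpha\in I,\ \alpha,\beta\in Q_1^{ncyc}\}$; $\Gamma=KQ^{Aus}/\langle I^{Aus}\rangle$. $\Phi(M)=\widehat{M}$ has $\widehat{M}_i=M_i$ ($i\in Q_0$), $\widehat{M}_\alpha=\mathrm{Im}\,M_\alpha$ ($\alpha\in Q_1^{cyc}$), $\widehat{M}_\beta=M_\beta$ ($\beta\in Q_1^{ncyc}$), and $\widehat{M}_{\alpha^+}$, $\widehat{M}_{\alpha^-}$ the surjection $M_{s(\alpha)}\to\mathrm{Im}\,M_\alpha$ and inclusion $\mathrm{Im}\,M_\alpha\to M_{t(\alpha)}$ factoring $M_\alpha$. *)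

(* Defs.v *)
From HB Require Import structures.
From mathcomp Require Import all_boot all_order all_algebra.
Set Implicit Arguments. Unset Strict Implicit. Unset Printing Implicit Defensive.
Import Order.TTheory GRing.Theory Num.Theory.

(* [qrel x y] means that the length-2 path  x y  (i.e. y then x, so     *)
(* tgt y = src x) belongs to I (paths are composed right to left).     *)
Record bquiver := BQuiver {
  Q0 : finType;
  Q1 : finType;
  src : Q1 -> Q0;
  tgt : Q1 -> Q0;
  qrel : Q1 -> Q1 -> bool }.

(* opposite bound quiver: right modules over KQ/<I> are left modules over it *)
Definition opQ (Q : bquiver) : bquiver :=
  @BQuiver (Q0 Q) (Q1 Q) (@tgt Q) (@src Q) (fun x y => qrel y x).

Section Paths.
Variable Q : bquiver.

(* A path is a start vertex together with the list of its arrows in the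
   order of traversal ([:: a1; a2; ...; ak] means a1 first).            *)
Definition qpath := (Q0 Q * seq (Q1 Q))%type.

Definition nzstep (x y : Q1 Q) := (tgt x == src y) && ~~ qrel y x.

(* composable path not containing any relation of I, i.e. a nonzero path
   (a basis element) of the monomial algebra KQ/<I> *)
Definition nzpath (p : qpath) : bool :=
  if p.2 is a :: w then (src a == p.1) && path nzstep a w else true.

Definition pend (p : qpath) : Q0 Q := last p.1 [seq tgt a | a <- p.2].

Fixpoint words (k : nat) : seq (seq (Q1 Q)) :=
  if k is k'.+1 then [seq a :: w | a <- enum (Q1 Q), w <- words k'] else [:: [::]].

Definition plist (L : nat) : seq qpath :=
  [seq p <- [seq (i, w) | i <- enum (Q0 Q), w <- flatten [seq words k | k <- iota 0 L]]
   | nzpath p].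

(* (KQ/<I>) is finite dimensional, witnessed by L: every path of length L
   contains a relation (hence is zero), so the nonzero paths of length < L
   form a basis of the algebra. *)
Definition fd_bound (L : nat) : Prop :=
  forall p : qpath, size p.2 = L -> ~~ nzpath p.

Definition gentle (L : nat) : Prop :=
  [/\ forall x y : Q1 Q, qrel x y -> tgt y = src x,
      forall v : Q0 Q, #|[pred a | src a == v]| <= 2 /\ #|[pred a | tgt a == v]| <= 2,
      forall a : Q1 Q,
        [/\ #|[pred b | (tgt b == src a) && ~~ qrel a b]| <= 1,
            #|[pred g | (src g == tgt a) && ~~ qrel g a]| <= 1,
            #|[pred b | qrel a b]| <= 1 &
            #|[pred g | qrel g a]| <= 1]
    & fd_bound L].

(* arrows lying on a repetition-free cyclic path a1 ... an with
   a_i a_(i+1) in I for all i (indices mod n): the set Q1^cyc *)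
Definition cyc_arrow (a : Q1 Q) : Prop :=
  exists c : seq (Q1 Q),
    [/\ uniq c, a \in c &
        forall k, k < size c ->
          qrel (nth a c k) (nth a c (k.+1 %% size c))].
End Paths.

(* Modules.  A finite dimensional left KQ/<I>-module is a space K^n     *)
(* (column vectors) with matrices e_i (action of the trivial paths) and *)
(* a_alpha (action of the arrows), satisfying the defining relations of *)
(* the algebra.  The vertex space M_i is the image of e_i, and the map  *)
(* M_alpha : M_(s alpha) -> M_(t alpha) is the restriction of a_alpha.  *)
Section Modules.
Local Open Scope ring_scope.
Variable K : fieldType.
Variable Q : bquiver.

Record qmod := QMod {
  mdim : nat;
  me : Q0 Q -> 'M[K]_mdim;
  ma : Q1 Q -> 'M[K]_mdim }.

Definition is_mod (M : qmod) : Prop :=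
  [/\ forall i j, me M i *m me M j = (if i == j then me M i else 0),
      \sum_(i : Q0 Q) me M i = 1%:M,
      forall a, ma M a = me M (tgt a) *m ma M a *m me M (src a) &
      forall x y, qrel x y -> ma M x *m ma M y = 0].

Definition is_hom (M N : qmod) (F : 'M[K]_(mdim N, mdim M)) : Prop :=
  (forall i, F *m me M i = me N i *m F) /\ (forall a, F *m ma M a = ma N a *m F).

Definition inj_map m n (F : 'M[K]_(n, m)) : Prop :=
  forall x : 'cV[K]_m, F *m x = 0 -> x = 0.
Definition surj_map m n (F : 'M[K]_(n, m)) : Prop :=
  forall y : 'cV[K]_n, exists x, y = F *m x.
Definition exact_at m n p (f : 'M[K]_(n, m)) (g : 'M[K]_(p, n)) : Prop :=
  forall y : 'cV[K]_n, g *m y = 0 <-> exists x, y = f *m x.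

(* The K-space Hom(M,N), encoded (via mxvec) as a row space, and its dimension *)
Definition homspace (M N : qmod) : 'M[K]_(mdim N * mdim M) :=
  ((\bigcap_(i : Q0 Q) kermx (lin_mx (fun F : 'M[K]_(mdim N, mdim M) =>
                                 F *m me M i - me N i *m F)))
   :&: (\bigcap_(a : Q1 Q) kermx (lin_mx (fun F : 'M[K]_(mdim N, mdim M) =>
                                 F *m ma M a - ma N a *m F))))%MS.
Definition homdim (M N : qmod) : nat := \rank (homspace M N).

Definition projective (P : qmod) : Prop :=
  forall (M M' : qmod) (f : 'M[K]_(mdim M', mdim M)) (g : 'M[K]_(mdim M', mdim P)),
    is_mod M -> is_mod M' -> is_hom f -> surj_map f -> is_hom g ->
    exists h : 'M[K]_(mdim M, mdim P), is_hom h /\ f *m h = g.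

Definition injective (E : qmod) : Prop :=
  forall (M M' : qmod) (f : 'M[K]_(mdim M', mdim M)) (g : 'M[K]_(mdim E, mdim M)),
    is_mod M -> is_mod M' -> is_hom f -> inj_map f -> is_hom g ->
    exists h : 'M[K]_(mdim E, mdim M'), is_hom h /\ h *m f = g.

Definition injdim_le1 (X : qmod) : Prop :=
  exists (E0 E1 : qmod) (i : 'M[K]_(mdim E0, mdim X)) (p : 'M[K]_(mdim E1, mdim E0)),
    [/\ is_mod E0 /\ is_mod E1, injective E0 /\ injective E1,
        is_hom i /\ is_hom p, inj_map i /\ surj_map p & exact_at i p].

(* The module spanned by the nonzero paths (of length < L) satisfying P,
   with left action by composition (a . p = p followed by a).
   For P closed under left multiplication this is the left ideal of KQ/<I>
   spanned by those paths. *)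
Section PathModule.
Variables (L : nat) (P : pred (qpath Q)).
Let B := [seq p <- plist Q L | P p].
Definition pathmod : qmod :=
  @QMod (size B)
    (fun i => \matrix_(r, c) ((r == c) && (pend (tnth (in_tuple B) c) == i))%:R)
    (fun a => \matrix_(r, c)
       (tnth (in_tuple B) r == ((tnth (in_tuple B) c).1, rcons (tnth (in_tuple B) c).2 a))%:R).
End PathModule.

Definition regmod (L : nat) : qmod := pathmod L predT.
(* P_i = Lambda e_i : spanned by the nonzero paths starting at i *)
Definition projmod (L : nat) (i : Q0 Q) : qmod := pathmod L (fun p => p.1 == i).
(* R(b) = Lambda b : spanned by the nonzero paths whose first arrow is b *)
Definition Rmod (L : nat) (b : Q1 Q) : qmod :=
  pathmod L (fun p => if p.2 is a :: _ then a == b else false).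

Definition gproj (L : nat) (N : qmod) : Prop :=
  exists (P : int -> qmod) (d : forall n : int, 'M[K]_(mdim (P (n + 1)), mdim (P n))),
    [/\ forall n, is_mod (P n) /\ projective (P n) /\ is_hom (d n),
        forall n : int, exact_at (d n) (d (n + 1)),
        (* and stays exact under Hom(-, Lambda) *)
        (forall (n : int) (g : 'M[K]_(mdim (regmod L), mdim (P (n + 1)))),
          is_hom g -> g *m d n = 0 ->
          exists h : 'M[K]_(mdim (regmod L), mdim (P (n + 1 + 1))),
            is_hom h /\ g = h *m d (n + 1)) &
        (* N is isomorphic to Ker d^0 *)
        exists iota : 'M[K]_(mdim (P 0), mdim N),
          [/\ is_hom iota, inj_map iota & exact_at iota (d 0)]].
End Modules.

(* 1-Gorenstein: Lambda has injective dimension <= 1 as left module and as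
   right module (= left module over the opposite algebra). *)
Definition one_gorenstein (K : fieldType) (Q : bquiver) (L : nat) : Prop :=
  injdim_le1 (regmod K Q L) /\ injdim_le1 (regmod K (opQ Q) L).

(* Components of Phi(N) = \hat N: \hat N_i = N_i and \hat N_alpha = Im N_alpha;
   we record the subspaces (as column spaces) and their dimensions. *)
Definition hatN_vertex (K : fieldType) (Q : bquiver) (N : qmod K Q) (i : Q0 Q) :=
  me N i.
Definition hatN_arrow (K : fieldType) (Q : bquiver) (N : qmod K Q) (a : Q1 Q) :=
  ma N a.
Definition dim_hatN_vertex (K : fieldType) (Q : bquiver) (N : qmod K Q) (i : Q0 Q) :=
  \rank (hatN_vertex N i).
Definition dim_hatN_arrow (K : fieldType) (Q : bquiver) (N : qmod K Q) (a : Q1 Q) :=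
  \rank (hatN_arrow N a).
Definition dim_vertex (K : fieldType) (Q : bquiver) (N : qmod K Q) (i : Q0 Q) :=
  \rank (me N i).

(* Main.v *)
Require Import Defs.
From HB Require Import structures.
From mathcomp Require Import all_boot all_order all_algebra.
Import Order.TTheory GRing.Theory Num.Theory.

Section PathFacts.
Variable Q : bquiver.

Lemma mem_words k w : (w \in words Q k) = (size w == k).
Proof.
elim: k w => [|k IH] [|a w] //=.
  by apply/negbTE/allpairsP => -[[x y] [_ _ ]].
apply/allpairsP/idP => [[[x y] [_ Hy E]]|H].
  by case: E => _ ->; rewrite /= eqSS -IH.
by exists (a, w); rewrite mem_enum IH.
Qed.

Lemma uniq_words k : uniq (words Q k).
Proof.
elim: k => [|k IH] //=; apply: allpairs_uniq => //; first exact: enum_uniq.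
by move=> [a1 w1] [a2 w2] _ _ /= [-> ->].
Qed.

Lemma mem_flat L w : (w \in flatten [seq words Q k | k <- iota 0 L]) = (size w < L).
Proof.
apply/flattenP/idP => [[s /mapP[k Hk ->]]|H].
  by rewrite mem_words => /eqP ->; move: Hk; rewrite mem_iota.
by exists (words Q (size w)); [apply/mapP; exists (size w); rewrite // mem_iota | rewrite mem_words].
Qed.

Lemma mem_plist L p : (p \in plist Q L) = nzpath p && (size p.2 < L).
Proof.
rewrite mem_filter; congr andb; apply/allpairsP/idP => [[[x y] [_ Hy ->]]|H].
  by rewrite -mem_flat.
by exists p; rewrite mem_enum mem_flat; case: p H.
Qed.

Lemma uniq_flat L : uniq (flatten [seq words Q k | k <- iota 0 L]).
Proof.
elim: L => [|L IH] //.
rewrite -addn1 iotaD add0n map_cat flatten_cat cat_uniq IH /= cats0 uniq_words andbT.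
by apply/hasPn => w; rewrite mem_words => /eqP <-; rewrite mem_flat ltnn.
Qed.

Lemma uniq_plist L : uniq (plist Q L).
Proof.
apply: filter_uniq; apply: allpairs_uniq; first exact: enum_uniq.
  exact: uniq_flat.
by move=> [a1 w1] [a2 w2].
Qed.

Lemma nz_cat v s t : @nzpath Q (v, s ++ t) -> @nzpath Q (v, s).
Proof. by case: s => //= a s; rewrite /nzpath /= cat_path => /andP[-> /andP[-> _]]. Qed.

Lemma nz_rcons v s a : @nzpath Q (v, rcons s a) -> @nzpath Q (v, s).
Proof. by rewrite -cats1 => /nz_cat. Qed.

Lemma nz_rcons2 v s l a :
  @nzpath Q (v, rcons (rcons s l) a) = @nzpath Q (v, rcons s l) && nzstep l a.
Proof.
case: s => [|x s]; rewrite /nzpath /=; first by rewrite !andbT.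
by rewrite rcons_path last_rcons andbA.
Qed.

Lemma nz_lt L (fd : fd_bound Q L) (p : qpath Q) : nzpath p -> size p.2 < L.
Proof.
case: p => v w /= H; rewrite ltnNge; apply/negP => Hle.
have := fd (v, take L w); rewrite /= size_takel // => /(_ erefl); apply/negP/negPn.
by apply: (@nz_cat _ _ (drop L w)); rewrite cat_take_drop.
Qed.

End PathFacts.

Local Open Scope ring_scope.

Section HomOp.
Variable K : fieldType.
Variables m n : nat.
Variables (X : 'M[K]_m) (Y : 'M[K]_n).
Definition homop (F : 'M[K]_(n,m)) := F *m X - Y *m F.
Fact homop_lin : linear homop.
Proof. move=> a F G; rewrite /homop mulmxDl mulmxDr -scalemxAl -scalemxAr scalerBr.
by rewrite addrACA opprD. Qed.
HB.instance Definition _ := GRing.isLinear.Build K _ _ _ homop homop_lin.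
Lemma homop_mul v :
  v *m lin_mx (fun F : 'M[K]_(n,m) => F *m X - Y *m F) = mxvec (vec_mx v *m X - Y *m vec_mx v).
Proof. exact: (mul_rV_lin homop). Qed.
Lemma homop_ker v :
  (v <= kermx (lin_mx (fun F : 'M[K]_(n,m) => F *m X - Y *m F)))%MS = (vec_mx v *m X == Y *m vec_mx v).
Proof. by rewrite sub_kermx homop_mul mxvec_eq0 subr_eq0. Qed.
End HomOp.

Lemma homP (K : fieldType) (Q : bquiver) (M N : qmod K Q) (v : 'rV_(mdim N * mdim M)) :
  (v <= homspace M N)%MS <-> is_hom (vec_mx v).
Proof.
rewrite /homspace sub_capmx; split.
- case/andP => /sub_bigcapmxP H1 /sub_bigcapmxP H2; split => [i|a].
    by apply/eqP; have := H1 i isT; rewrite homop_ker.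
  by apply/eqP; have := H2 a isT; rewrite homop_ker.
- case=> H1 H2; apply/andP; split; apply/sub_bigcapmxP => i _; rewrite homop_ker; apply/eqP.
    exact: H1.
  exact: H2.
Qed.

Lemma rank_transfer (K : fieldType) p q k n (H : 'M[K]_(p,q)) (S : 'M[K]_(k,n)) (A : 'M[K]_(n,q)) :
  (forall u : 'rV_n, (u <= S)%MS -> (u *m A <= H)%MS) ->
  (forall v : 'rV_q, (v <= H)%MS -> exists2 u : 'rV_n, (u <= S)%MS & v = u *m A) ->
  (forall u : 'rV_n, (u <= S)%MS -> u *m A = 0 -> u = 0) ->
  \rank H = \rank S.
Proof.
move=> Ha Hb Hc.
have eqH : (S *m A == H)%MS.
  apply/andP; split; apply/row_subP => i.
    by rewrite row_mul; apply: Ha; apply: row_sub.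
  have [u Su ->] := Hb _ (row_sub i H).
  by case/submxP: Su => w ->; rewrite -mulmxA submxMl.
rewrite -(eqmxP eqH) -(mxrank_mul_ker S A).
suff -> : (S :&: kermx A)%MS = 0 by rewrite mxrank0 addn0.
apply/row_matrixP => i; rewrite row0.
have Hi := row_sub i (S :&: kermx A)%MS.
apply: Hc.
  by apply: submx_trans Hi _; apply: capmxSl.
by apply/sub_kermxP; apply: submx_trans Hi _; apply: capmxSr.
Qed.

Section Gen.
Variables (K : fieldType) (Q : bquiver) (L : nat) (P : pred (qpath Q)) (N : qmod K Q).
Hypothesis HN : is_mod N.
Variable c0 : qpath Q.
Local Notation B := [seq p <- plist Q L | P p].
Local Notation M := (pathmod K L P).
Local Notation tB c := (tnth (in_tuple [seq p <- plist Q L | P p]) c).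

Definition Nw (w : seq (Q1 Q)) : 'M[K]_(mdim N) := foldl (fun X a => ma N a *m X) 1%:M w.
Definition wc (p : qpath Q) := drop (size c0.2) p.2.
Definition Amat : 'M[K]_(mdim N, mdim N * size B) :=
  \matrix_(k, j) (mxvec (\matrix_(r, c) Nw (wc (tB c)) r k)) 0 j.

Lemma Amat_col (u : 'rV_(mdim N)) r c : vec_mx (u *m Amat) r c = (Nw (wc (tB c)) *m u^T) r 0.
Proof. rewrite !mxE; apply: eq_bigr => k _; rewrite !mxE mxvecE mxE mulrC. done. Qed.

Lemma meM i r c : me M i r c = ((r == c) && (pend (tB c) == i))%:R.
Proof. by rewrite mxE. Qed.

Lemma maM a r c : ma M a r c = (tB r == ((tB c).1, rcons (tB c).2 a))%:R.
Proof. by rewrite mxE. Qed.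


Lemma eA a : me N (tgt a) *m ma N a = ma N a.
Proof. case: HN => He _ Ha _; rewrite (Ha a) !mulmxA He eqxx -!mulmxA. done. Qed.

Lemma Ae a : ma N a *m me N (src a) = ma N a.
Proof. case: HN => He _ Ha _; rewrite (Ha a) -!mulmxA He eqxx. done. Qed.

Lemma mama a l : ~~ nzstep l a -> ma N a *m ma N l = 0.
Proof.
case: HN => He _ Ha Hr; rewrite /nzstep negb_and negbK => /orP[Ht|Hq]; last exact: Hr.
by rewrite -(Ae a) -(eA l) mulmxA -(mulmxA _ (me N (src a))) He eq_sym (negbTE Ht) mulmx0 mul0mx.
Qed.

Lemma NwE (x : 'cV_(mdim N)) v w : me N v *m x = x ->
  me N (last v [seq tgt a | a <- w]) *m (Nw w *m x) = Nw w *m x.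
Proof.
move=> Hx; elim/last_ind: w => [|w a IH]; first by rewrite /Nw /= mul1mx.
by rewrite map_rcons last_rcons /Nw foldl_rcons -/(Nw w) -!mulmxA mulmxA eA.
Qed.

Lemma Nw_rcons w a : Nw (rcons w a) = ma N a *m Nw w.
Proof. by rewrite /Nw foldl_rcons. Qed.

Hypothesis H1 : c0 \in B.
Hypothesis H2 : forall p, p \in B -> p = (c0.1, c0.2 ++ wc p).
Hypothesis H3 : forall p a, p \in B -> @nzpath Q (p.1, rcons p.2 a) -> (p.1, rcons p.2 a) \in B.
Hypothesis H5 : forall w a, (c0.1, c0.2 ++ rcons w a) \in B -> (c0.1, c0.2 ++ w) \in B.

Lemma uB : uniq B.
Proof. exact/filter_uniq/uniq_plist. Qed.

Lemma nzB p : p \in B -> nzpath p.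
Proof. by rewrite mem_filter mem_plist => /andP[_ /andP[]]. Qed.

Lemma tB_inj c c' : (tB c == tB c') = (c == c').
Proof. by rewrite !(tnth_nth c0) /= nth_uniq // uB. Qed.

Lemma hom_of (u : 'rV_(mdim N)) : me N (pend c0) *m u^T = u^T ->
  (forall a, ~~ @nzpath Q (c0.1, rcons c0.2 a) -> ma N a *m u^T = 0) ->
  @is_hom K Q M N (vec_mx (u *m Amat)).
Proof.
move=> Hx Hc; set x := u^T in Hx Hc.
have Fe r c : vec_mx (u *m Amat) r c = (Nw (wc (tB c)) *m x) r 0 := Amat_col u r c.
case: HN => He _ _ _.
split => [i|a]; apply/matrixP => r c; set p := tB c;
  have Hp : p \in B := mem_tnth c (in_tuple B);
  have Ep := H2 _ Hp; set w := wc p in Ep Fe *; have Ew : wc p = w by [];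
  clearbody w.
- rewrite [LHS]mxE (bigD1 c) //= big1 => [|k /negbTE Hk]; last by rewrite meM Hk mulr0.
  rewrite meM eqxx /= addr0.
  transitivity ((me N i *m (Nw w *m x)) r 0); last first.
    by rewrite !mxE; apply: eq_bigr => j _; rewrite Fe Ew.
  have Hpend : pend p = last (pend c0) [seq tgt a | a <- w].
    by rewrite Ep /pend /= map_cat last_cat.
  rewrite -(NwE _ _ w Hx) -Hpend mulmxA He eq_sym Fe Ew.
  change (tB c) with p; case: eqP => [E|_]; first by rewrite mulr1 E Hpend (NwE _ _ w Hx).
  by rewrite mulr0 mul0mx mxE.
- rewrite [LHS]mxE.
  transitivity ((ma N a *m (Nw w *m x)) r 0); last first.
    by rewrite !mxE; apply: eq_bigr => j _; rewrite Fe Ew.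
  case Hq: ((p.1, rcons p.2 a) \in B).
    have /(tnthP (in_tuple B)) [k0 Ek0] := Hq.
    rewrite (bigD1 k0) //= big1 => [|k Hk]; last first.
      by rewrite maM -/p Ek0 tB_inj (negbTE Hk) mulr0.
    rewrite maM -/p Ek0 eqxx mulr1 addr0 Fe -Ek0 /wc /=.
    rewrite Ep /= rcons_cat drop_size_cat // Nw_rcons mulmxA //.
  rewrite big1 => [|k _]; last first.
    rewrite maM -/p; case: eqP; rewrite ?mulr0 // => Ek.
    by move: Hq; rewrite -Ek mem_tnth.
  have nz : ~~ @nzpath Q (p.1, rcons p.2 a) by apply: contraFN Hq => Hnz; exact: H3.
  case/lastP: w Ew Ep => [|w' l] Ew Ep.
    move: nz; rewrite Ep /= cats0 => /Hc.
    by rewrite /Nw /= mul1mx => ->; rewrite mxE.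
  move: nz (nzB _ Hp); rewrite Ep /= -rcons_cat nz_rcons2 => nz nzp.
  rewrite nzp /= in nz.
  by rewrite Nw_rcons !mulmxA mama // !mul0mx mxE.
Qed.

Lemma col_hom (F : 'M[K]_(mdim N, mdim M)) (c0i : 'I_(size B)) :
  @is_hom K Q M N F -> tB c0i = c0 ->
  forall c r, F r c = (Nw (wc (tB c)) *m col c0i F) r 0.
Proof.
move=> [hF1 hF2] Ec0.
suff gen w c : tB c = (c0.1, c0.2 ++ w) -> forall r, F r c = (Nw w *m col c0i F) r 0.
  by move=> c r; apply: gen; apply: H2; apply: mem_tnth.
elim/last_ind: w c => [|w a IH] c Ec r.
  move: Ec; rewrite cats0 -surjective_pairing -Ec0 => /eqP; rewrite tB_inj => /eqP ->.
  by rewrite /Nw /= mul1mx mxE.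
have Hw : (c0.1, c0.2 ++ w) \in B by apply: (H5 _ a); rewrite -Ec; apply: mem_tnth.
have /(tnthP (in_tuple B)) [c' Ec'] := Hw.
move/matrixP: (hF2 a) => /(_ r c').
rewrite mxE (bigD1 c) //= big1 => [|k Hk]; last first.
  by rewrite maM -Ec' /= rcons_cat -Ec tB_inj (negbTE Hk) mulr0.
rewrite maM -Ec' /= rcons_cat -Ec eqxx mulr1 addr0 => ->.
rewrite Nw_rcons -mulmxA !mxE; apply: eq_bigr => j _.
by rewrite (IH c' (esym Ec')) mxE.
Qed.

Lemma hom_cons (F : 'M[K]_(mdim N, mdim M)) (c0i : 'I_(size B)) :
  @is_hom K Q M N F -> tB c0i = c0 ->
  me N (pend c0) *m col c0i F = col c0i F /\
  (forall a, ~~ @nzpath Q (c0.1, rcons c0.2 a) -> ma N a *m col c0i F = 0).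
Proof.
move=> [hF1 hF2] Ec0; split.
  apply/colP => r; move/matrixP: (hF1 (pend c0)) => /(_ r c0i).
  rewrite mxE (bigD1 c0i) //= big1 => [|k Hk]; last by rewrite meM (negbTE Hk) mulr0.
  rewrite meM eqxx Ec0 eqxx mulr1 addr0 => E.
  by rewrite [in RHS]mxE E !mxE; apply: eq_bigr => j _; rewrite mxE.
move=> a nz; apply/colP => r; move/matrixP: (hF2 a) => /(_ r c0i).
rewrite mxE big1 => [|k _]; last first.
  rewrite maM Ec0; case: eqP; rewrite ?mulr0 // => Ek.
  by move: nz; rewrite -Ek nzB // mem_tnth.
by move=> E; rewrite [RHS]mxE E !mxE; apply: eq_bigr => j _; rewrite mxE.
Qed.

Theorem homdim_gen k (S : 'M[K]_(k, mdim N)) :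
  (forall u : 'rV_(mdim N), (u <= S)%MS <-> (me N (pend c0) *m u^T = u^T /\
     forall a, ~~ @nzpath Q (c0.1, rcons c0.2 a) -> ma N a *m u^T = 0)) ->
  homdim M N = \rank S.
Proof.
move=> HS; have /(tnthP (in_tuple B)) [c0i Ec0] := H1.
rewrite /homdim; apply: (@rank_transfer K _ _ _ _ _ _ Amat).
- move=> u /HS [h1 h2]; apply/homP; exact: hom_of.
- move=> v /homP hF; exists (col c0i (vec_mx v))^T.
    by apply/HS; rewrite trmxK; apply: hom_cons.
  apply: (can_inj vec_mxK); apply/matrixP => r c.
  by rewrite Amat_col trmxK (col_hom _ _ hF (esym Ec0)).
- move=> u Su H0; apply: (can_inj (@trmxK _ _ _)); apply/colP => r.
  have := Amat_col u r c0i; rewrite H0 -Ec0 /wc drop_size /Nw /= mul1mx !mxE => <-.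
  by [].
Qed.

End Gen.

Lemma memB (Q : bquiver) L (P : pred (qpath Q)) (fd : fd_bound Q L) p :
  (p \in [seq p <- plist Q L | P p]) = P p && nzpath p.
Proof.
rewrite mem_filter mem_plist; have := @nz_lt Q L fd p.
by case: (nzpath p) => [/(_ isT) ->|_]; rewrite ?andbT ?andbF.
Qed.

Lemma idem_sub (K : fieldType) Q (N : qmod K Q) (HN : is_mod N) i (u : 'rV_(mdim N)) :
  (u <= (me N i)^T)%MS <-> me N i *m u^T = u^T.
Proof.
case: HN => He _ _ _; split.
  by case/submxP => w ->; rewrite trmx_mul trmxK mulmxA He eqxx.
by move=> E; rewrite -[u]trmxK -E trmx_mul submxMl.
Qed.

Lemma idem_subb (K : fieldType) Q (N : qmod K Q) (HN : is_mod N) i (u : 'rV_(mdim N)) :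
  (u <= (me N i)^T)%MS = (me N i *m u^T == u^T).
Proof. by apply/idP/eqP => /(idem_sub _ _ _ HN). Qed.

Lemma off_zero (K : fieldType) Q (N : qmod K Q) (HN : is_mod N) i a (u : 'rV_(mdim N)) :
  me N i *m u^T = u^T -> src a != i -> ma N a *m u^T = 0.
Proof.
move=> E H; have [He _ _ _] := HN; rewrite -E -(Ae _ _ _ HN a) mulmxA -(mulmxA (ma N a)) He.
by rewrite (negbTE H) mulmx0 mul0mx.
Qed.

Theorem lemma4p2 (K : closedFieldType) (Q : bquiver) (L : nat)
  (Hgentle : gentle Q L) (HGor : one_gorenstein K Q L)
  (N : qmod K Q) (HN : is_mod N) (HGP : gproj L N) :
  (forall i : Q0 Q,
     dim_hatN_vertex N i = dim_vertex N i /\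
     dim_vertex N i = homdim (projmod K L i) N) /\
  (forall a b : Q1 Q, @cyc_arrow Q a -> qrel a b ->
     (dim_hatN_arrow N a : int) =
       (homdim (projmod K L (src a)) N : int) - (homdim (Rmod K L b) N : int)).
Proof.
case: Hgentle => Hrel _ Hloc fd.
have Pi i : dim_vertex N i = homdim (projmod K L i) N.
  rewrite /dim_vertex -mxrank_tr /projmod.
  symmetry; apply: (@homdim_gen K Q L (fun p => p.1 == i) N HN (i, [::])).
  - by rewrite !(memB _ _ _ fd) /= eqxx.
  - by move=> [v w]; rewrite !(memB _ _ _ fd) /wc /= drop0 => /andP[/eqP -> _].
  - by move=> p a; rewrite !(memB _ _ _ fd) /= => /andP[-> _].
  - by move=> w a; rewrite !(memB _ _ _ fd) /= => /andP[-> /nz_rcons].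
  - move=> u; split => [/(idem_sub _ _ _ HN) E|[E _]]; last exact/(idem_sub _ _ _ HN).
    split => // a.
    by rewrite /nzpath /= andbT => /(off_zero _ _ _ HN _ _ _ E).
split => [i|a b _ Hab]; first by split; [|exact: Pi].
have Etb : tgt b = src a := Hrel _ _ Hab.
set S := ((me N (src a))^T :&: kermx (ma N a)^T)%MS.
have HR : homdim (Rmod K L b) N = \rank S.
  apply: (@homdim_gen K Q L _ N HN (src b, [:: b])).
  - by rewrite !(memB _ _ _ fd) //= eqxx /nzpath /= eqxx.
  - move=> [v [|x t]]; rewrite !(memB _ _ _ fd) //= => /andP[/eqP -> ].
    by rewrite /nzpath /wc /= drop0 => /andP[/eqP -> _].
  - by move=> [v [|x t]] a'; rewrite !(memB _ _ _ fd) //= => /andP[-> _] ->.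
  - by move=> w a'; rewrite !(memB _ _ _ fd) //= eqxx /= => /(nz_rcons Q _ (b :: w) a').
  - move=> u; rewrite sub_capmx (idem_subb _ _ _ HN) sub_kermx /pend /= Etb.
    have tr : (u *m (ma N a)^T == 0) = (ma N a *m u^T == 0).
      by rewrite -trmx_eq0 trmx_mul trmxK.
    rewrite tr; split.
      move=> /andP[/eqP E /eqP Z]; split => // a'.
      rewrite /nzpath /= eqxx andbT /nzstep /= negb_and negbK => /orP[Ht|Hq].
        by apply: (off_zero _ _ _ HN _ _ _ E); rewrite -Etb eq_sym.
      have [_ _ _ Hc] := Hloc b.
      move/card_le1_eqP: Hc => Hc. have <- := Hc a' a Hq Hab.
      exact: Z.
    move=> [E Z]; rewrite E eqxx /=; apply/eqP/Z.
    by rewrite /nzpath /= eqxx /nzstep Hab andbF.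
rewrite HR -Pi /dim_hatN_arrow /hatN_arrow /dim_vertex.
have := mxrank_mul_ker (me N (src a))^T (ma N a)^T.
rewrite -trmx_mul (Ae _ _ _ HN a) !mxrank_tr -/S => <-.
by rewrite PoszD addrK.
Qed.
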